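(* Let $q$ be a prime power, $t\geq 2$ and $n\geq 1$ integers, and $\sigma=\begin{pmatrix} a & b\\ c & d\end{pmatrix}\in\mathrm{GL}_2(\mathbb{F}_q)$. Suppose that the polynomial $x^{nt}-A\in\mathbb{F}_q[x]$, with $A\neq -d/c$, is irreducible over $\mathbb{F}_q$, and if $t$ is even assume moreover $q\equiv 1\pmod 4$. Then $g_0=P_{\sigma^{-1}}(x^n-A)$ is an irreducible polynomial of degree $n$ with $g_0(\sigma\cdot\infty)\neq 0$, and $g_1=g_0^{R_{\sigma,t}}$ is irreducible.
   Context: For $\sigma=\begin{pmatrix} a & b\\ c & d\end{pmatrix}\in\mathrm{GL}_2(\mathbb{F}_q)$, $\sigma\cdot\infty=a/c$ if $c\neq 0$ and $\sigma\cdot\infty=\infty$ if $c=0$. For $f\in\mathbb{F}_q[x]$ of degree $m$, $P_\sigma(f)(x)=(cx+d)^m f\!\left(\frac{ax+b}{cx+d}\right)$; $\sigma^{-1}$ is the inverse matrix. $S_t(f)(x)=f(x^t)$, and the $R_{\sigma,t}$-transform is $g^{R_{\sigma,t}}=P_{\sigma^{-1}}\circ S_t\circ P_\sigma(g)$ (each $P$ using the degree of its input). *)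

(* Defs.v *)
From HB Require Import structures.
From mathcomp Require Import all_boot all_order all_algebra all_field.
Set Implicit Arguments. Unset Strict Implicit. Unset Printing Implicit Defensive.
Import GRing.Theory.
Local Open Scope ring_scope.

Definition mxa (F : fieldType) (s : 'M[F]_2) : F := s ord0 ord0.
Definition mxb (F : fieldType) (s : 'M[F]_2) : F := s ord0 ord_max.
Definition mxc (F : fieldType) (s : 'M[F]_2) : F := s ord_max ord0.
Definition mxd (F : fieldType) (s : 'M[F]_2) : F := s ord_max ord_max.

(* P_sigma(f)(x) = (cx+d)^m f((ax+b)/(cx+d)), m = deg f, i.e.
   sum_i f_i (ax+b)^i (cx+d)^(m-i). *)
Definition Ptrans (F : fieldType) (s : 'M[F]_2) (f : {poly F}) : {poly F} :=
  let m := (size f).-1 in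
  \sum_(i < size f)
     f`_i *: (('X * (mxa s)%:P + (mxb s)%:P) ^+ i *
              ('X * (mxc s)%:P + (mxd s)%:P) ^+ (m - i)).

Definition Strans (F : fieldType) (t : nat) (f : {poly F}) : {poly F} :=
  f \Po 'X^t.

Definition Rtrans (F : fieldType) (s : 'M[F]_2) (t : nat) (g : {poly F})
  : {poly F} := Ptrans (invmx s) (Strans t (Ptrans s g)).

(* sigma . infinity, as a point of P^1(F) = option F (None = infinity). *)
Definition act_inf (F : fieldType) (s : 'M[F]_2) : option F :=
  if mxc s != 0 then Some (mxa s / mxc s) else None.

(* Vanishing of a polynomial at a point of P^1(F); a polynomial in F[x]
   is never considered to vanish at infinity. *)
Definition proj_root (F : fieldType) (g : {poly F}) (p : option F) : bool :=
  if p is Some x then root g x else false.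

(* Main.v *)
Require Import Defs.
From HB Require Import structures.
From mathcomp Require Import all_boot all_order all_algebra all_field.
From mathcomp Require Import ring zify.
Import GRing.Theory.
Set Implicit Arguments. Unset Strict Implicit. Unset Printing Implicit Defensive.
Local Open Scope ring_scope.

Lemma fld1 (K : fieldType) (a b x y : K) : y != 0 -> a * (x / y) + b = (a * x + b * y) / y.
Proof. by move=> y0; field; exact: y0. Qed.
Lemma fld2 (K : fieldType) (x y : K) : y != 0 -> x / y / (1 / y) = x.
Proof. by move=> y0; field; rewrite y0 oner_eq0. Qed.

Section Gen.
Variables (F K : fieldType) (rho : {rmorphism F -> K}).

Definition ev (r : K) (f : {poly F}) : K := (map_poly rho f).[r].

Lemma evM r p q : ev r (p * q) = ev r p * ev r q.
Proof. by rewrite /ev rmorphM hornerM. Qed.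
Lemma evD r p q : ev r (p + q) = ev r p + ev r q.
Proof. by rewrite /ev rmorphD hornerD. Qed.
Lemma evX r : ev r 'X = r.
Proof. by rewrite /ev map_polyX hornerX. Qed.
Lemma evC r c : ev r c%:P = rho c.
Proof. by rewrite /ev map_polyC hornerC. Qed.
Lemma evXn r p k : ev r (p ^+ k) = ev r p ^+ k.
Proof. by rewrite /ev rmorphXn horner_exp. Qed.
Lemma evZ r c p : ev r (c *: p) = rho c * ev r p.
Proof. by rewrite /ev map_polyZ hornerZ. Qed.
Lemma ev_sum r m (G : 'I_m -> {poly F}) : ev r (\sum_(i < m) G i) = \sum_(i < m) ev r (G i).
Proof. by rewrite /ev rmorph_sum horner_sum. Qed.

Definition Hf (f : {poly F}) m (x y : K) :=
  \sum_(i < m.+1) rho f`_i * (x ^+ i * y ^+ (m - i)).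

Lemma Hf_ev (f : {poly F}) m (x y : K) : y != 0 -> (size f <= m.+1)%N ->
  Hf f m x y = y ^+ m * ev (x / y) f.
Proof.
move=> y0 sf; rewrite /ev (@horner_coef_wide _ m.+1) ?size_map_poly // mulr_sumr.
apply: eq_bigr => i _; rewrite coef_map /=.
have hi : (i <= m)%N by rewrite -ltnS.
have -> : y ^+ m = y ^+ i * y ^+ (m - i) by rewrite -exprD subnKC.
rewrite expr_div_n.
have : y ^+ i != 0 by rewrite expf_neq0.
move: (y ^+ i) (y ^+ (m - i)) (x ^+ i) => a b c a0.
by field.
Qed.

Definition uu (M : 'M[F]_2) : {poly F} := 'X * (mxa M)%:P + (mxb M)%:P.
Definition vv (M : 'M[F]_2) : {poly F} := 'X * (mxc M)%:P + (mxd M)%:P.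
Definition hom (M : 'M[F]_2) m (f : {poly F}) :=
  \sum_(i < m.+1) f`_i *: (uu M ^+ i * vv M ^+ (m - i)).

Lemma ev_hom M m f r : ev r (hom M m f) =
  Hf f m (rho (mxa M) * r + rho (mxb M)) (rho (mxc M) * r + rho (mxd M)).
Proof.
rewrite /hom ev_sum; apply: eq_bigr => i _.
by rewrite evZ evM !evXn /uu /vv !evD !evM evX !evC (mulrC r) (mulrC r).
Qed.


End Gen.

Section Poly.
Variable F : fieldType.

Lemma size_lin (a b : F) : (size ('X * a%:P + b%:P)%R <= 2)%N.
Proof.
apply: leq_trans (size_polyD _ _) _; rewrite geq_max.
rewrite mulrC mul_polyC (leq_trans (size_scale_leq _ _)) ?size_polyX //.
exact: leq_trans (size_polyC_leq1 _) _.
Qed.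

Lemma size_exp_lin (p : {poly F}) i : (size p <= 2)%N -> (size (p ^+ i)%R <= i.+1)%N.
Proof.
move=> hp; apply: leq_trans (size_exp_leq _ _) _.
rewrite ltnS; have : ((size p).-1 <= 1)%N by lia.
move=> h; rewrite -[X in (_ <= X)%N]mul1n leq_mul2r h orbT //.
Qed.

Lemma size_term (p q : {poly F}) i m : (i <= m)%N -> (size p <= 2)%N -> (size q <= 2)%N ->
  (size (p ^+ i * q ^+ (m - i))%R <= m.+1)%N.
Proof.
move=> him hp hq; apply: leq_trans (size_mul_leq _ _) _.
have := size_exp_lin i hp; have := size_exp_lin (m - i) hq; lia.
Qed.

Lemma size_hom (M : 'M[F]_2) m f : (size (hom M m f) <= m.+1)%N.
Proof.
rewrite /hom; apply: leq_trans (size_sum _ _ _) _.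
apply/bigmax_leqP => i _; apply: leq_trans (size_scale_leq _ _) _.
by apply: size_term; rewrite ?size_lin // -ltnS.
Qed.

Lemma Ptrans_hom (M : 'M[F]_2) f : Ptrans M f = hom M (size f).-1 f.
Proof.
rewrite /Ptrans /hom; case sf: (size f) => [|k] /=.
  by rewrite big_ord0 big_ord1 nth_default ?sf // scale0r.
by [].
Qed.

Local Notation K := {fraction {poly F}}.
Definition rhoF : F -> K := fun c => @FracField.tofrac {poly F} (c%:P).
HB.instance Definition _ := GRing.RMorphism.copy rhoF (@FracField.tofrac {poly F} \o polyC).
Definition XF : K := @FracField.tofrac {poly F} 'X.

Lemma tofrac_ev (p : {poly F}) : @FracField.tofrac {poly F} p = ev rhoF XF p.
Proof.
rewrite -{1}(coefK p) poly_def rmorph_sum /ev horner_coef size_map_poly.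
apply: eq_bigr => i _; rewrite coef_map -mul_polyC rmorphM rmorphXn //.
Qed.

Lemma vvF (M : 'M[F]_2) : rhoF (mxc M) * XF + rhoF (mxd M) = @FracField.tofrac {poly F} (vv M).
Proof. by rewrite /vv rmorphD rmorphM mulrC. Qed.


Lemma rel (M : 'M[F]_2) : M \in unitmx ->
  [/\ mxa M * mxa (invmx M) + mxb M * mxc (invmx M) = 1,
      mxa M * mxb (invmx M) + mxb M * mxd (invmx M) = 0,
      mxc M * mxa (invmx M) + mxd M * mxc (invmx M) = 0
    & mxc M * mxb (invmx M) + mxd M * mxd (invmx M) = 1].
Proof.
move=> hM; have E := mulmxV hM.
have e := fun i j => congr1 (fun B : 'M[F]_2 => B i j) E.
move: (e ord0 ord0) (e ord0 ord_max) (e ord_max ord0) (e ord_max ord_max).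
rewrite !mxE !big_ord_recl !big_ord0 !addr0 /mxa /mxb /mxc /mxd /=.
have -> : lift ord0 ord0 = ord_max :> 'I_2 by apply/val_inj.
by move=> -> -> -> ->.
Qed.

Lemma vv_neq0 (M : 'M[F]_2) : M \in unitmx -> vv M != 0.
Proof.
move=> hM; case: (rel hM) => _ _ _ h; apply/eqP => v0.
have c0 := congr1 (fun p : {poly F} => p`_1) v0.
have d0 := congr1 (fun p : {poly F} => p`_0) v0.
move: c0 d0; rewrite /vv !coefD !coefMC !coefX !coefC /= => c0 d0.
move: c0 d0; rewrite mul1r mul0r add0r addr0 => c0 d0; rewrite c0 d0 in h.
by move: h; rewrite !mul0r addr0 => /eqP; rewrite eq_sym oner_eq0.
Qed.


Lemma tofrac_inj (p q : {poly F}) :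
  @FracField.tofrac {poly F} p = @FracField.tofrac {poly F} q -> p = q.
Proof. by move=> h; apply/eqP; rewrite -tofrac_eq h. Qed.

Lemma hom_mul (M : 'M[F]_2) m1 m2 (f g : {poly F}) : M \in unitmx ->
  (size f <= m1.+1)%N -> (size g <= m2.+1)%N ->
  hom M (m1 + m2) (f * g) = hom M m1 f * hom M m2 g.
Proof.
move=> hM sf sg; apply: tofrac_inj; rewrite tofracM !tofrac_ev !ev_hom.
have y0 : rhoF (mxc M) * XF + rhoF (mxd M) != 0 by rewrite vvF tofrac_eq0 vv_neq0.
rewrite !Hf_ev // ?evM ?exprD; last first.
  apply: leq_trans (size_mul_leq _ _) _; lia.
ring.
Qed.

Lemma hom_comp (M : 'M[F]_2) m (f : {poly F}) : M \in unitmx -> (size f <= m.+1)%N ->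
  hom (invmx M) m (hom M m f) = f.
Proof.
move=> hM sf; apply: tofrac_inj; rewrite tofrac_ev ev_hom.
set y := rhoF (mxc (invmx M)) * XF + rhoF (mxd (invmx M)).
set x := rhoF (mxa (invmx M)) * XF + rhoF (mxb (invmx M)).
have y0 : y != 0 by rewrite /y vvF tofrac_eq0 vv_neq0 // unitmx_inv.
rewrite Hf_ev ?size_hom // ev_hom.
case: (rel hM) => r1 r2 r3 r4.
have R1 : rhoF (mxa M) * x + rhoF (mxb M) * y = XF.
  have : rhoF (mxa M * mxa (invmx M) + mxb M * mxc (invmx M)) = 1 by rewrite r1 rmorph1.
  have : rhoF (mxa M * mxb (invmx M) + mxb M * mxd (invmx M)) = 0 by rewrite r2 rmorph0.
  rewrite !rmorphD !rmorphM /x /y => e2 e1.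
  transitivity ((rhoF (mxa M) * rhoF (mxa (invmx M)) + rhoF (mxb M) * rhoF (mxc (invmx M))) * XF +
     (rhoF (mxa M) * rhoF (mxb (invmx M)) + rhoF (mxb M) * rhoF (mxd (invmx M)))); first by ring.
  by rewrite e1 e2 mul1r addr0.
have R2 : rhoF (mxc M) * x + rhoF (mxd M) * y = 1.
  have : rhoF (mxc M * mxa (invmx M) + mxd M * mxc (invmx M)) = 0 by rewrite r3 rmorph0.
  have : rhoF (mxc M * mxb (invmx M) + mxd M * mxd (invmx M)) = 1 by rewrite r4 rmorph1.
  rewrite !rmorphD !rmorphM /x /y => e2 e1.
  transitivity ((rhoF (mxc M) * rhoF (mxa (invmx M)) + rhoF (mxd M) * rhoF (mxc (invmx M))) * XF +
     (rhoF (mxc M) * rhoF (mxb (invmx M)) + rhoF (mxd M) * rhoF (mxd (invmx M)))); first by ring.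
  by rewrite e1 e2 mul0r add0r.
have -> : rhoF (mxa M) * (x / y) + rhoF (mxb M) = XF / y.
  by rewrite -R1; exact: fld1 y0.
have -> : rhoF (mxc M) * (x / y) + rhoF (mxd M) = 1 / y.
  by rewrite -R2; exact: fld1 y0.
have y1 : 1 / y != 0 by rewrite div1r invr_eq0.
rewrite (@Hf_ev _ _ rhoF f m (XF / y) (1 / y) y1 sf).
have -> : XF / y / (1 / y) = XF by exact: fld2 y0.
rewrite -tofrac_ev mulrA -exprMn.
have -> : y * (1 / y) = 1 by rewrite div1r (mulfV y0).
by rewrite expr1n mul1r.
Qed.


Lemma size_Ptrans (M : 'M[F]_2) f : (size (Ptrans M f) <= size f)%N.
Proof.
have [->|f0] := eqVneq f 0; first by rewrite /Ptrans size_poly0 big_ord0 size_poly0.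
rewrite Ptrans_hom; apply: leq_trans (size_hom _ _ _) _.
by rewrite prednK // size_poly_gt0.
Qed.

Lemma Ptrans_inv (M : 'M[F]_2) f : M \in unitmx -> size (Ptrans M f) = size f ->
  Ptrans (invmx M) (Ptrans M f) = f.
Proof.
move=> hM hs; rewrite [in LHS]Ptrans_hom hs Ptrans_hom hom_comp //.
by case: (size f).
Qed.

Lemma Ptrans_mul (M : 'M[F]_2) p q : M \in unitmx -> p != 0 -> q != 0 ->
  Ptrans M (p * q) = Ptrans M p * Ptrans M q.
Proof.
move=> hM p0 q0; rewrite !Ptrans_hom size_mul //.
have sp := size_poly_gt0 p; have sq := size_poly_gt0 q.
rewrite p0 in sp; rewrite q0 in sq.
have -> : (size p + size q).-2 = ((size p).-1 + (size q).-1)%N by lia.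
by rewrite hom_mul // ?prednK.
Qed.

Lemma irr_Ptrans (M : 'M[F]_2) f : M \in unitmx -> irreducible_poly f ->
  size (Ptrans M f) = size f -> irreducible_poly (Ptrans M f).
Proof.
move=> hM irf hs; set g := Ptrans M f.
have hN : invmx M \in unitmx by rewrite unitmx_inv.
have fg : Ptrans (invmx M) g = f by exact: Ptrans_inv.
have f0 : f != 0 by exact: irredp_neq0.
split; first by rewrite hs; case: irf.
move=> q sq1 dq.
have g0 : g != 0 by rewrite -size_poly_gt0 hs size_poly_gt0.
have q0 : q != 0 by apply: contraNneq g0 => q0; move: dq; rewrite q0 dvd0p.
set r := g %/ q.
have grq : g = r * q by rewrite divpK.
have r0 : r != 0 by apply: contraNneq g0 => r0; rewrite grq r0 mul0r.
have E : f = Ptrans (invmx M) r * Ptrans (invmx M) q by rewrite -fg grq Ptrans_mul.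
have Pr0 : Ptrans (invmx M) r != 0 by apply: contraNneq f0 => e; rewrite E e mul0r.
have Pq0 : Ptrans (invmx M) q != 0 by apply: contraNneq f0 => e; rewrite E e mulr0.
have s1 := size_Ptrans (invmx M) r; have s2 := size_Ptrans (invmx M) q.
have sf : size f = (size (Ptrans (invmx M) r) + size (Ptrans (invmx M) q)).-1 by rewrite E size_mul.
have sg : size g = (size r + size q).-1 by rewrite grq size_mul.
have sr : (0 < size r)%N by rewrite size_poly_gt0.
have sqq : (0 < size q)%N by rewrite size_poly_gt0.
have hs' : size g = size f := hs.
have eq : size (Ptrans (invmx M) q) = size q.
  move: sf sg s1 s2 sr sqq hs'; rewrite -!subn1.
  move: (size (Ptrans (invmx M) r)) (size (Ptrans (invmx M) q)) (size r) (size q) (size g) (size f) => ? ? ? ? ? ?. lia.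
have dPq : Ptrans (invmx M) q %| f by rewrite E dvdp_mull.
have := irf _ (eq_ind_r (fun k => k != 1%N) sq1 eq) dPq.
move/eqp_size; rewrite eq => e2.
by rewrite -dvdp_size_eqp // e2 hs.
Qed.


Lemma sum_delta m j (T : nat -> {poly F}) : (j <= m)%N ->
  \sum_(i < m.+1) ((i : nat) == j)%:R *: T i = T j.
Proof.
move=> hj; have hj' : (j < m.+1)%N by [].
rewrite (bigD1 (Ordinal hj')) //= eqxx scale1r big1 ?addr0 // => i.
by rewrite -val_eqE /= => /negbTE ->; rewrite scale0r.
Qed.

Lemma Ptrans_XnA (M : 'M[F]_2) m (A : F) : (1 <= m)%N ->
  Ptrans M ('X^m - A%:P) = uu M ^+ m - A *: vv M ^+ m.
Proof.
move=> hm; rewrite /Ptrans size_XnsubC //=.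
transitivity (\sum_(i < m.+1) (((i : nat) == m)%:R *: (uu M ^+ i * vv M ^+ (m - i)) -
    A *: (((i : nat) == 0%N)%:R *: (uu M ^+ i * vv M ^+ (m - i))))).
  apply: eq_bigr => i _; rewrite coefB coefXn coefC scalerBl scalerA.
  by case: ((i : nat) == 0%N); rewrite ?mulr1 ?mulr0 ?scale0r.
rewrite sumrB -scaler_sumr (sum_delta (fun i => uu M ^+ i * vv M ^+ (m - i))) //.
rewrite (sum_delta (fun i => uu M ^+ i * vv M ^+ (m - i))) //.
by rewrite subnn subn0 expr0 mulr1 expr0 mul1r.
Qed.

Lemma coef_lin_exp (a b : F) k : (('X * a%:P + b%:P) ^+ k)`_k = a ^+ k.
Proof.
elim: k => [|k IH]; first by rewrite !expr0 coefC.
rewrite exprSr mulrDr mulrA coefD !coefMC coefMX /= IH.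
rewrite [_`_k.+1]nth_default ?mul0r ?addr0 -?exprSr //.
by apply: size_exp_lin; apply: size_lin.
Qed.

Lemma size_XnA (M : 'M[F]_2) m (A : F) : (1 <= m)%N ->
  mxa M ^+ m - A * mxc M ^+ m != 0 ->
  size (Ptrans M ('X^m - A%:P)) = m.+1.
Proof.
move=> hm h; apply/eqP; rewrite eqn_leq.
rewrite (leq_trans (size_Ptrans _ _)) ?size_XnsubC //=.
rewrite ltnNge; apply: contra h => hs.
rewrite -(nth_default 0 hs) Ptrans_XnA // coefB coefZ /uu /vv !coef_lin_exp //.
Qed.

End Poly.

Lemma irr_Xn (F : fieldType) n t (A : F) : (1 <= n)%N -> (1 <= t)%N ->
  irreducible_poly ('X^(n * t) - A%:P) -> irreducible_poly ('X^n - A%:P).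
Proof.
move=> hn ht irr; split; first by rewrite size_XnsubC.
move=> q sq dq.
have h0 : 'X^(n * t) - A%:P != 0 by rewrite -size_poly_gt0 size_XnsubC // muln_gt0 hn.
have dq' : (q \Po 'X^t) %| ('X^(n * t) - A%:P).
  have := dvdp_comp_poly ('X^t) dq.
  by rewrite comp_polyB comp_polyC comp_Xn_poly -exprM (mulnC t n).
have c0 : q \Po 'X^t != 0 by apply/eqP => e; move: dq'; rewrite e dvd0p (negbTE h0).
have q0 : q != 0 by apply/eqP => e; move: c0; rewrite e comp_poly0 eqxx.
have sc : size (q \Po 'X^t) = ((size q).-1 * t).+1.
  have := size_comp_poly q ('X^t); rewrite size_polyXn /= => <-; by rewrite prednK // size_poly_gt0.
have sq2 : (2 <= size q)%N.
  by move: sq; rewrite -size_poly_gt0 in q0; move: q0; case: (size q) => [|[|k]].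
have sq1 : size (q \Po 'X^t) != 1%N.
  rewrite sc eqSS muln_eq0 negb_or -lt0n -lt0n ht andbT; by case: (size q) sq2 => [|[|k]].
have := irr _ sq1 dq' => /eqp_size; rewrite sc size_XnsubC ?muln_gt0 ?hn // => /eqP.
rewrite eqSS eqn_mul2r eqn0Ngt ht /= => /eqP e.
rewrite -dvdp_size_eqp // size_XnsubC // -e prednK //; by case: (size q) sq2.
Qed.

Lemma dvd_XnA (F : fieldType) (w : F) e j :
  ('X^e - w%:P) %| 'X^(e * j) - (w ^+ j)%:P.
Proof. by rewrite exprM polyC_exp subrXX dvdp_mulIl. Qed.

Lemma fld3 (K : fieldType) (a' c' c d : K) : c != 0 -> c' != 0 -> c * a' + d * c' = 0 ->
  a' / c' = - d / c.
Proof.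
move=> c0 c'0 h.
have -> : a' = - (d * c') / c.
  by apply: (mulfI c0); rewrite mulrCA mulfV // mulr1; apply/eqP; rewrite -addr_eq0 h.
by field; rewrite c0 c'0.
Qed.

Theorem lemma5p4 (F : finFieldType) (t n : nat) (s : 'M[F]_2) (A : F) :
  (2 <= t)%N -> (1 <= n)%N -> s \in unitmx ->
  irreducible_poly ('X^(n * t) - A%:P) ->
  (mxc s != 0 -> A != - mxd s / mxc s) ->
  (~~ odd t -> #|F| %% 4 = 1)%N ->
  let g0 := Ptrans (invmx s) ('X^n - A%:P) in
  [/\ irreducible_poly g0, size g0 = n.+1,
      ~~ proj_root g0 (act_inf s)
    & irreducible_poly (Rtrans s t g0)].
Proof.
move=> ht hn hs irr hA _ g0.
have ht0 : (0 < t)%N by apply: leq_trans ht.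
have hnt : (0 < n * t)%N by rewrite muln_gt0 hn.
set N := invmx s.
have hN : N \in unitmx by rewrite unitmx_inv.
have iN : invmx N = s by rewrite invmxK.
case: (rel hs) => r1 r2 r3 r4.
case: (rel hN); rewrite iN => q1 q2 q3 q4.
have key : forall e j, (1 <= e)%N -> (e * j = n * t)%N -> mxc N != 0 ->
    mxa N ^+ j = A * mxc N ^+ j -> e = (n * t)%N.
  move=> e j he ej c0 h.
  have Aw : A = (mxa N / mxc N) ^+ j by rewrite expr_div_n h mulfK // expf_neq0.
  have d := dvd_XnA (mxa N / mxc N) e j; rewrite ej -Aw in d.
  have se : size ('X^e - (mxa N / mxc N)%:P) != 1%N by rewrite size_XnsubC // eqSS -lt0n.
  have := irr _ se d => /eqp_size; rewrite !size_XnsubC //; by case.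
have c0case : forall j, (1 <= j)%N -> mxc N = 0 -> mxa N ^+ j - A * mxc N ^+ j != 0.
  move=> j hj c0; rewrite c0 expr0n eqn0Ngt hj /= mulr0 subr0 expf_neq0 //.
  apply/eqP => a0; move: r1; rewrite a0 c0 !mulr0 addr0 => /eqP; rewrite eq_sym oner_eq0.
  by [].
have nv1 : mxa N ^+ n - A * mxc N ^+ n != 0.
  have [c0|c0] := eqVneq (mxc N) 0; first exact: c0case.
  apply/eqP => /eqP; rewrite subr_eq0 => /eqP h.
  have := key t n (ltnW ht) (mulnC t n) c0 h.
  rewrite -{1}(mul1n t) => /eqP; rewrite eqn_mul2r eqn0Ngt ht0 /= => /eqP n1.
  subst n; rewrite !expr1 in h.
  have cs0 : mxc s != 0.
    apply/eqP => cs0; move: r3 r4; rewrite cs0 !mul0r !add0r => /eqP.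
    rewrite mulf_eq0 (negbTE c0) orbF => /eqP ->; rewrite mul0r => /eqP.
    by rewrite eq_sym oner_eq0.
  have := hA cs0; rewrite -(fld3 cs0 c0 r3) h mulfK // eqxx.
  by [].
have nv2 : mxa N ^+ (n * t) - A * mxc N ^+ (n * t) != 0.
  have [c0|c0] := eqVneq (mxc N) 0; first exact: c0case.
  apply/eqP => /eqP; rewrite subr_eq0 => /eqP h.
  have := key 1%N (n * t)%N (leqnn 1) (mul1n _) c0 h.
  move=> e; have := leq_mul hn ht; by rewrite -e.
have sg0 : size g0 = n.+1 by exact: size_XnA.
have irrX : irreducible_poly ('X^n - A%:P) by exact: irr_Xn irr.
split => //.
- by apply: irr_Ptrans => //; rewrite sg0 size_XnsubC.
- rewrite /act_inf; case: ifP => [cs0|] //=.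
  rewrite /root /g0 Ptrans_XnA // /uu /vv !hornerE.
  rewrite (mulrC (mxa s / mxc s)) (mulrC (mxa s / mxc s)) !fld1 //.
  rewrite -/N q1 q3.
  rewrite mul0r expr0n eqn0Ngt hn /= mulr0 subr0 expf_neq0 //.
  by rewrite div1r invr_eq0.
- have E : Ptrans s (Ptrans N ('X^n - A%:P)) = 'X^n - A%:P.
    by rewrite -{1}iN; apply: Ptrans_inv => //; rewrite -/g0 sg0 size_XnsubC.
  rewrite /Rtrans /g0 -/N E /Strans comp_polyB comp_polyC comp_Xn_poly -exprM (mulnC t n).
  by apply: irr_Ptrans => //; rewrite size_XnA // size_XnsubC.
Qed.
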